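(* There is no Michael space if and only if every $K$-Lusin space is productively Lindelöf.
   Context: All spaces are completely regular. A Michael space is a Lindelöf space $Y$ such that $Y\times\mathbb{P}$ is not Lindelöf, where $\mathbb{P}$ is the space of irrationals. A space is $K$-Lusin if it is an injective continuous image of a Lindelöf Čech-complete space. $X$ is productively Lindelöf if $X\times Y$ is Lindelöf for every Lindelöf space $Y$. *)

(* Defs.v *)
From HB Require Import structures.
From mathcomp Require Import all_boot all_order all_algebra.
From mathcomp Require Import all_classical all_reals all_analysis.
From mathcomp Require Import Rstruct Rstruct_topology borel_hierarchy.
Set Implicit Arguments. Unset Strict Implicit. Unset Printing Implicit Defensive.
Import Order.TTheory GRing.Theory Num.Theory.
Local Open Scope classical_set_scope.

Definition tychonoff_space (X : topologicalType) : Prop :=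
  completely_regular_space X /\ hausdorff_space X.

Definition lindelof (X : topologicalType) : Prop :=
  forall (I : Type) (U : I -> set X),
    (forall i, open (U i)) -> setT `<=` \bigcup_(i in setT) U i ->
    exists J : set I, countable J /\ setT `<=` \bigcup_(i in J) U i.

Definition irrationals : topologicalType :=
  set_type (@irrational Rdefinitions.R).

Definition embedding (X K : topologicalType) (f : X -> K) : Prop :=
  continuous f /\ injective f /\
  forall U : set X, open U -> exists V : set K, open V /\ f @` U = range f `&` V.

(* Čech-complete: a Tychonoff space which is a G_delta in some (equivalently,
   every) Hausdorff compactification of it. *)
Definition cech_complete (X : topologicalType) : Prop :=
  tychonoff_space X /\
  exists (K : topologicalType) (f : X -> K),
    compact [set: K] /\ hausdorff_space K /\ embedding f /\
    dense (range f) /\ Gdelta (range f).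

Definition K_Lusin (X : topologicalType) : Prop :=
  exists (Z : topologicalType) (f : Z -> X),
    tychonoff_space Z /\ lindelof Z /\ cech_complete Z /\
    continuous f /\ injective f /\ (forall x : X, exists z : Z, f z = x).

Definition michael_space (Y : topologicalType) : Prop :=
  tychonoff_space Y /\ lindelof Y /\ ~ lindelof (Y * irrationals)%type.

Definition productively_lindelof (X : topologicalType) : Prop :=
  forall Y : topologicalType, tychonoff_space Y -> lindelof Y -> lindelof (X * Y)%type.

(* Main.v *)
Require Import Defs.
From HB Require Import structures.
From mathcomp Require Import all_boot all_order all_algebra.
From mathcomp Require Import all_classical all_reals all_analysis.
From mathcomp Require Import Rstruct Rstruct_topology borel_hierarchy unstable finmap.
From mathcomp Require Import lra zify ring.
Set Implicit Arguments. Unset Strict Implicit. Unset Printing Implicit Defensive.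
Import Order.TTheory GRing.Theory Num.Theory.
Import numFieldNormedType.Exports.
Local Open Scope classical_set_scope.

Lemma lindelof_surj (A B : topologicalType) (h : A -> B) :
  continuous h -> (forall b, exists a, h a = b) -> lindelof A -> lindelof B.
Proof.
move=> ch sh lA Ix U oU cU.
have oV : forall i, open (h @^-1` U i).
  by move=> i; apply: open_comp => // x _; exact: ch.
have [|J [cJ JU]] := lA Ix (fun i => h @^-1` U i) oV.
  by move=> a _; have [i _ Ui] := cU (h a) I; exists i.
exists J; split => // b _; have [a <-] := sh b.
by have [i Ji Ui] := JU a I; exists i.
Qed.

Lemma lindelof_swap (A B : topologicalType) :
  lindelof (A * B)%type -> lindelof (B * A)%type.
Proof.
apply: lindelof_surj (@swap A B) _ _; first exact: swap_continuous.
by case=> b a; exists (a, b).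
Qed.

Lemma cover_compact_any (T : topologicalType) (A : set T) :
  compact A -> cover_compact A.
Proof.
move=> cA.
have [[t _]|] := pselect (exists t : T, True); last first.
  move=> nT I D f _ _; exists fset0 => // x; exfalso; apply: nT; by exists x.
pose pT := HB.pack_for ptopologicalType T (isPointed.Build T t).
have := @compact_cover pT.
move=> /(congr1 (fun P => P A)) /=; move=> E.
have : @compact pT A by exact: cA.
by rewrite E.
Qed.

Lemma countable_enum (T : Type) (J : set T) (t0 : T) :
  countable J -> exists e : nat -> T, J `<=` range e.
Proof.
move=> /ocard_geP [s]; exists (fun n => odflt t0 (s n)) => t Jt.
have [n _ E] := 'surj_s (ltac:(by exists t) : (Some @` J) (Some t)).
by exists n => //; rewrite /= E.
Qed.

Fixpoint accum {T : topologicalType} (V : nat -> set T) (j : nat) : set T :=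
  if j is j'.+1 then accum V j' `|` closure (V j) else closure (V 0%N).

Lemma accum_closed (T : topologicalType) (V : nat -> set T) j : closed (accum V j).
Proof. elim: j => [|j IH] /=; [exact: closed_closure | apply: closedU => //; exact: closed_closure]. Qed.

Lemma accum_sub (T : topologicalType) (V : nat -> set T) (S : set T) j :
  (forall i, closure (V i) `<=` S) -> accum V j `<=` S.
Proof. by move=> h; elim: j => [|j IH] /=; [exact: h | move=> p [/IH|/h]]. Qed.

Lemma accum_mono (T : topologicalType) (V : nat -> set T) j j' :
  (j <= j')%N -> accum V j `<=` accum V j'.
Proof.
move=> /subnK <-; elim: (j' - j)%N => [|k IH] //= p /IH h; by left.
Qed.

Lemma accum_in (T : topologicalType) (V : nat -> set T) j : V j `<=` accum V j.
Proof.
case: j => [|j] p Vp /=; first exact: subset_closure.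
by right; exact: subset_closure.
Qed.

Lemma filter_forall_le (T : Type) (F : set_system T) (P : nat -> T -> Prop) n :
  Filter F -> (forall m, F [set x | P m x]) -> F [set x | forall m, (m <= n)%N -> P m x].
Proof.
move=> FF h; elim: n => [|n IH].
  by apply: filterS (h 0%N) => x Px m; rewrite leqn0 => /eqP ->.
apply: filterS (filterI IH (h n.+1)) => x [h1 h2] m.
by rewrite leq_eqVlt => /orP[/eqP -> //|]; rewrite ltnS; exact: h1.
Qed.

Lemma box_lemma (Z Y K : topologicalType) (g : Z -> K) (Ix : Type) (U : Ix -> set (Z * Y)%type) :
  embedding g -> (forall i, open (U i)) -> forall z y i, U i (z, y) ->
  exists Vb : set K, exists Ob : set Y,
    [/\ open Vb, Vb (g z), nbhs y Ob &
        forall z' y', Vb (g z') -> Ob y' -> U i (z', y')].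
Proof.
move=> [cg [ig eg]] oU z y i Uzy.
have nU : nbhs (z, y) (U i) by apply: open_nbhs_nbhs; split.
case: nU => -[A B] /= [nA nB] AB.
move: nA; rewrite nbhsE => -[A' [oA' A'z] A'A].
have [Vb [oV EV]] := eg A' oA'.
exists Vb, B; split => //.
  have : (g @` A') (g z) by exists z.
  by rewrite EV => -[].
move=> z' y' Vz' By'.
have : (g @` A') (g z') by rewrite EV; split => //; exists z'.
case=> a A'a /ig E; subst a.
by apply: (AB (z', y')); split => //; exact: A'A.
Qed.

Lemma reg_lemma (K : topologicalType) (p : K) (Gs : set K) :
  compact [set: K] -> hausdorff_space K -> open Gs -> Gs p ->
  exists V, [/\ open V, V p & closure V `<=` Gs].
Proof.
move=> cK hK oG Gp.
have reg := @compact_regular K p setT hK cK (@filterT _ _ (nbhs_filter p)).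
have [A nA AG] := reg Gs (open_nbhs_nbhs (conj oG Gp)).
exists A°; split; [exact: open_interior | exact: nA |].
by apply: subset_trans AG; apply: closureS; exact: interior_subset.
Qed.

Lemma level_family (Z K : topologicalType) (g : Z -> K) (Gs : set K) (z0 : Z) :
  continuous g -> lindelof Z -> compact [set: K] -> hausdorff_space K ->
  open Gs -> (forall z, Gs (g z)) ->
  exists V : nat -> set K, (forall j, closure (V j) `<=` Gs) /\ (forall z, exists j, V j (g z)).
Proof.
move=> cg lZ cK hK oG Gg.
have [Of hO] := @choice _ _ (fun z (V : set K) => [/\ open V, V (g z) & closure V `<=` Gs])
  (fun z => @reg_lemma K (g z) Gs cK hK oG (Gg z)).
have oOf : forall z, open (g @^-1` Of z).
  by move=> z; apply: open_comp; [move=> x _; exact: cg | case: (hO z)].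
have cOf : [set: Z] `<=` \bigcup_z (g @^-1` Of z).
  by move=> z _; exists z => //; case: (hO z).
have [J [cJ JO]] := lZ Z _ oOf cOf.
have [e He] := countable_enum z0 cJ.
exists (fun j => Of (e j)); split; first by move=> j; case: (hO (e j)).
move=> z; have [z' Jz' Oz] := JO z I; have [j _ E] := He z' Jz'.
by exists j; rewrite E.
Qed.

Lemma main_cover (M Z Y K : topologicalType) (d : nat -> M -> nat) (g : Z -> K)
    (G : nat -> set K) :
  (forall m x, \forall x' \near x, d m x' = d m x) ->
  (forall k : nat -> nat, exists x, forall m, (k m <= d m x)%N) ->
  lindelof (M * Y)%type -> lindelof Z -> compact [set: K] -> hausdorff_space K ->
  embedding g -> (forall n, open (G n)) -> range g = \bigcap_n G n ->
  lindelof (Z * Y)%type.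
Proof.
move=> dloc dom lMY lZ cK hK eg oG rg Ix U oU cU.
have [[[z0 y0] _]|nZY] := pselect (exists p : Z * Y, True); last first.
  by exists set0; split => // p; exfalso; apply: nZY; exists p.
have [i0 _ _] := cU (z0, y0) I.
have Gg : forall l z, G l (g z).
  move=> l z; have h : range g (g z) by exists z.
  by move: h; rewrite rg; apply.
have [V hV] := @choice _ _ (fun l (V : nat -> set K) =>
    (forall j, closure (V j) `<=` G l) /\ (forall z, exists j, V j (g z)))
  (fun l => @level_family Z K g (G l) z0 eg.1 lZ cK hK (oG l) (Gg l)).
pose W l j := accum (V l) j.
have WG : forall l j, W l j `<=` G l by move=> l j; apply: accum_sub; exact: (hV l).1.
have Wcl : forall l j, closed (W l j) by move=> l j; exact: accum_closed.
pose C x := \bigcap_m W m (d m x).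
pose B x n := \bigcap_(m in [set m | (m <= n)%N]) W m (d m x).
have Crange : forall x p, C x p -> exists z, g z = p.
  move=> x p Cp; have h : (\bigcap_n G n) p by move=> m _; apply: (WG m (d m x)); exact: Cp.
  by move: h; rewrite -rg => -[z _ <-]; exists z.
have key : forall w : M * Y, exists t : set M * set Y * set Ix,
   [/\ nbhs w.1 t.1.1, nbhs w.2 t.1.2, finite_set t.2 &
     forall x' y' z, t.1.1 x' -> t.1.2 y' -> (forall m, W m (d m x') (g z)) ->
       exists2 i, t.2 i & U i (z, y')].
  move=> [x y] /=.
  have ex3 : forall p : K, exists t : set K * set Y * Ix, C x p ->
      [/\ open t.1.1, t.1.1 p, nbhs y t.1.2 &
          forall z' y', t.1.1 (g z') -> t.1.2 y' -> U t.2 (z', y')].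
    move=> p; have [cp|ncp] := pselect (C x p); last first.
      by exists (setT, setT, i0) => /ncp.
    have [z <-] := Crange x p cp; have [i _ Ui] := cU (z, y) I.
    have [Vb [Ob [h1 h2 h3 h4]]] := box_lemma eg oU Ui.
    by exists (Vb, Ob, i).
  have [trip htrip] := @choice _ _ _ ex3.
  have cC : compact (C x).
    by apply: (subclosed_compact _ cK) => //; apply: closed_bigI => m _; exact: Wcl.
  have [D' D'C CD'] := @cover_compact_any K (C x) cC K (C x) (fun p => (trip p).1.1)
    (fun p cp => ltac:(by case: (htrip p cp))) (fun p cp => ltac:(by exists p => //; case: (htrip p cp))).
  have DCp : forall p, p \in D' -> C x p by move=> p /D'C /set_mem.
  pose Gs := \bigcup_(p in [set` D']) (trip p).1.1.
  have oGs : open Gs by apply: bigcup_open => p /DCp cp; case: (htrip p cp).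
  have [n Bn] : exists n, B x n `<=` Gs.
    have cGc : compact (~` Gs).
      by apply: (subclosed_compact _ cK) => //; exact: open_closedC.
    have oB : forall m, open (~` B x m).
      by move=> m; apply: closed_openC; apply: closed_bigI => m' _; exact: Wcl.
    have covB : ~` Gs `<=` \bigcup_(m in [set: nat]) ~` B x m.
      move=> q nq; have /existsNP [m nm] : ~ C x q by move=> /CD'.
      exists m => // hB; apply: nm => _; exact: hB m (leqnn m).
    have [D'' _ cD''] := @cover_compact_any K (~` Gs) cGc nat [set: nat]
      (fun m => ~` B x m) (fun m _ => oB m) covB.
    exists (\max_(m <- D'') m) => q Bq.
    have [//|nq] := pselect (Gs q).
    have [m D''m Bm] := cD'' q nq; exfalso; apply: Bm => m' hm'; apply: Bq.
    by apply: (leq_trans hm'); apply: leq_bigmax_seq.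
  exists ([set x' | forall m, (m <= n)%N -> d m x' = d m x],
          \bigcap_(p in [set` D']) (trip p).1.2, (fun p => (trip p).2) @` [set` D']).
  split => /=.
  - exact: filter_forall_le (fun m => dloc m x).
  - by apply: filter_bigI => p /DCp cp; case: (htrip p cp).
  - exact: finite_image (finite_fset D').
  move=> x'0 y'0 z hN hO hW.
  have gB : B x n (g z) by move=> m /= hm; rewrite -(hN m hm); exact: hW m.
  have [p D'p Vp] := Bn _ gB.
  case: (htrip p (DCp p D'p)) => _ _ _ hb.
  by exists (trip p).2; [exists p | apply: hb => //; exact: hO p D'p].
have [tt htt] := @choice _ _ _ key.
have oW : forall w, open (((tt w).1.1 `*` (tt w).1.2)°) by move=> w; exact: open_interior.
have cW : [set: M * Y] `<=` \bigcup_w ((tt w).1.1 `*` (tt w).1.2)°.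
  move=> [x y] _; exists (x, y) => //; case: (htt (x, y)) => /= nx ny _ _.
  by exists ((tt (x, y)).1.1, (tt (x, y)).1.2).
have [J' [cJ' J'c]] := lMY (M * Y)%type _ oW cW.
exists (\bigcup_(w in J') (tt w).2); split.
  apply: bigcup_countable cJ' _ => w _; apply: finite_set_countable.
  by case: (htt w).
move=> [z y'] _.
have [k hk] := @choice _ _ (fun m j => W m j (g z))
  (fun m => ltac:(have [j hj] := (hV m).2 z; exists j; exact: accum_in)).
have [x' hx'] := dom k.
have hW : forall m, W m (d m x') (g z) by move=> m; exact: accum_mono (hx' m) _ (hk m).
have [w J'w Iw] := J'c (x', y') I.
have [Nx Oy] := interior_subset Iw.
case: (htt w) => _ _ _ hw; have [i Fi Ui] := hw _ _ _ Nx Oy hW.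
by exists i => //; exists w.
Qed.

Notation RR := Rdefinitions.R.
Definition pv (x : irrationals) : RR := set_val x.

Lemma pv_cont : continuous pv.
Proof. exact: initial_continuous. Qed.

Lemma pv_inj : injective pv.
Proof. move=> x y; rewrite /pv !set_valE => h; exact: val_inj. Qed.

Lemma pv_irr (x : irrationals) : irrational (pv x).
Proof. by case: x => r hr; rewrite /pv set_valE /=; apply/set_mem. Qed.

Definition mkP (r : RR) (h : irrational r) : irrationals := exist _ r (mem_set h).

Lemma pv_mkP r h : pv (@mkP r h) = r.
Proof. by rewrite /pv set_valE. Qed.

Lemma openP (U : set irrationals) : open U -> exists2 A : set RR, open A & pv @^-1` A = U.
Proof. move=> oU. have [A oA E] : wopen (set_val : irrationals -> _) U := oU. by exists A. Qed.

Lemma P_open (A : set RR) : open A -> open (pv @^-1` A : set irrationals).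
Proof. by move=> oA; apply: open_comp oA => x _; exact: pv_cont. Qed.

Lemma P_hausdorff : hausdorff_space irrationals.
Proof.
move=> p q cl; apply: pv_inj; apply: Rhausdorff => A B nA nB.
have h1 := pv_cont nA. have h2 := pv_cont nB. have := cl _ _ h1 h2.
case=> r [Ar Br].
by exists (pv r).
Qed.

Lemma P_tych : tychonoff_space irrationals.
Proof. split; [exact: (@uniform_completely_regular RR (set_type (@irrational RR))) | exact: P_hausdorff]. Qed.

Lemma countable_image T U (D : set U) (h : U -> T) : countable D -> countable (h @` D).
Proof. by move=> cD; exact: sub_countable (card_image_le h D) cD. Qed.

Lemma countable_sub T (A B : set T) : A `<=` B -> countable B -> countable A.
Proof. by move=> AB cB; exact: sub_countable (subset_card_le AB) cB. Qed.

Lemma irr_dense : dense (@irrational RR).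
Proof.
have [F oF ->] := @irrational_Gdelta RR.
by have /Baire : forall n, open (F n) /\ dense (F n) := oF.
Qed.

Local Open Scope ring_scope.

Lemma P_lindelof : lindelof irrationals.
Proof.
move=> Ix U oU cU.
pose good (ab : rat * rat) (i : Ix) :=
  forall x : irrationals, ratr ab.1 < pv x < ratr ab.2 -> U i x.
have [sel hsel] : {sel : rat * rat -> option Ix &
    forall ab, forall i, good ab i -> exists2 j, sel ab = Some j & good ab j}.
  apply: (@choice _ _ (fun ab o => forall i, good ab i -> exists2 j, o = Some j & good ab j)).
  move=> ab; have [[i gi]|ng] := pselect (exists i, good ab i).
    by exists (Some i) => _ _; exists i.
  by exists None => i gi; exfalso; apply: ng; exists i.
pose S ab := [set i | sel ab = Some i].
exists (\bigcup_(ab in [set: rat * rat]) S ab); split.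
  apply: bigcup_countable => // ab _; apply: finite_set_countable.
  rewrite /S; case: (sel ab) => [i|].
    by apply: (@sub_finite_set _ _ [set i]) => // j /= [->].
  by apply: (@sub_finite_set _ _ set0) => // j.
move=> x _; have [i _ Uix] := cU x I.
have [Ob oO EO] := openP (oU i).
have Ox : Ob (pv x) by rewrite -EO in Uix.
have := oO _ Ox; rewrite /= => /nbhs_ballP [e e0 be].
have [a] := @rat_in_itvoo RR (pv x - e) (pv x) ltac:(by rewrite ltrBlDr ltrDl).
rewrite in_itv /= => /andP[a1 a2].
have [b] := @rat_in_itvoo RR (pv x) (pv x + e) ltac:(by rewrite ltrDl).
rewrite in_itv /= => /andP[b1 b2].
have gi : good (a, b) i.
  move=> x' /andP[/= h1 h2]; rewrite -EO /=; apply: be.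
  rewrite /ball /= ltr_distlC; apply/andP; split; lra.
have [j sj gj] := hsel (a, b) i gi.
exists j; first by exists (a, b).
by apply: gj; rewrite /= a2 b1.
Qed.

Notation K0 := (one_point_compactification RR).
Definition fP (x : irrationals) : K0 := Some (pv x).

Lemma K0_hausdorff : hausdorff_space K0.
Proof. exact: one_point_compactification_hausdorff (@locally_compactR RR) (@Rhausdorff RR). Qed.

Lemma fP_embedding : embedding fP.
Proof.
split; [|split].
- move=> x A nA; have := @pv_cont x (Some @^-1` A) nA; exact.
- by move=> x y [/pv_inj].
- move=> U oU; have [Ob oO EO] := openP oU.
  exists (Some @` Ob); split; first exact: one_point_compactification_open_some.
  apply/seteqP; split.
    move=> _ [x Ux <-]; split; first by exists x.
    by exists (pv x) => //; rewrite -EO in Ux.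
  move=> _ [[x _ <-] [r Obr [E]]]; exists x => //.
  by rewrite -EO /=; rewrite -E.
Qed.

Lemma fP_dense : dense (range fP).
Proof.
move=> Ob [p Op] oO.
have nO : nbhs p Ob by move: oO; rewrite openE => /(_ _ Op).
have [B [oB Bne] BO] : exists2 B : set RR, (open B /\ B !=set0) & Some @` B `<=` Ob.
  case: p Op nO => [r|] Op.
    move=> nr; have nr' : nbhs r (Some @^-1` Ob) := nr.
    move: nr'; rewrite nbhsE => -[B [oB Br] BO].
    exists B; first by split => //; exists r.
    by move=> _ [b Bb <-]; exact: BO.
  move=> nN.
  have [C [cC clC] CO] : filter_from (compact `&` closed)
     (fun U => Some @` (~` U) `|` [set None]) Ob := nN.
  exists (~` C); last by move=> _ [b Bb <-]; apply: CO; left; exists b.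
  split; first exact: closed_openC.
  have hb := @compact_bounded RR RR^o C cC.
  rewrite /= /bounded_near /+oo /= in hb. case: hb => M [Mr hM].
  exists (M + 2)%R => /(hM (M + 1)%R ltac:(lra)) /=.
  by move=> h; have h2 := ler_norm (M + 2); lra.
have [s [Bs Is]] := irr_dense Bne oB.
by exists (fP (mkP Is)); split; [apply: BO; exists s; rewrite ?pv_mkP | exists (mkP Is)].
Qed.

Definition qe (n : nat) : rat := odflt 0%R (choice.unpickle n).

Lemma qeP (q : rat) : qe (choice.pickle q) = q.
Proof. by rewrite /qe choice.pickleK. Qed.

Lemma fP_Gdelta : Gdelta (range fP).
Proof.
have cl1 (p : K0) : closed [set p].
  exact: (@accessible_closed_set1 K0 (@hausdorff_accessible K0 K0_hausdorff) p).
exists (fun n => if n is n'.+1 then ~` [set Some (ratr (qe n'))] else ~` [set None]).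
  by case=> [|n]; apply: closed_openC.
apply/seteqP; split.
  move=> _ [x _ <-] [|n] _ //=.
  move=> [] E; have hr : rational (pv x) by rewrite E; exists (qe n).
  exact: (pv_irr hr).
move=> [r|] h; last by case: (h 0%N I).
have Ir : irrational r.
  move=> [q _ E]; have := h (choice.pickle q).+1 I; apply => /=.
  by rewrite qeP E.
by exists (mkP Ir) => //; rewrite /fP pv_mkP.
Qed.

Lemma P_cech : cech_complete irrationals.
Proof.
split; first exact: P_tych.
exists K0, fP; split; first exact: one_point_compactification_compact.
split; first exact: K0_hausdorff.
split; first exact: fP_embedding.
split; [exact: fP_dense | exact: fP_Gdelta].
Qed.

Lemma P_KLusin : K_Lusin irrationals.
Proof.
exists irrationals, id; split; first exact: P_tych.
split; first exact: P_lindelof.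
split; first exact: P_cech.
split; first by move=> x.
by split => // x; exists x.
Qed.

Definition Tm (x : RR) : RR := (x - (Num.floor x)%:~R)^-1.
Definition yk (m : nat) (x : RR) : RR := iter m Tm x.

Lemma rational_add_int (x : RR) (c : int) : rational (x - c%:~R) -> rational x.
Proof.
move=> [q _ E]; exists (q + c%:~R) => //.
by rewrite rmorphD /= ratr_int E subrK.
Qed.

Lemma irr_frac_neq0 (x : RR) : irrational x -> x - (Num.floor x)%:~R != 0.
Proof.
move=> ix; apply/negP => /eqP E; apply: ix; apply: (@rational_add_int _ (Num.floor x)).
by rewrite E; exists 0 => //; rewrite rmorph0.
Qed.

Lemma irr_Tm (x : RR) : irrational x -> irrational (Tm x).
Proof.
move=> ix [q _ E]; apply: ix; apply: (@rational_add_int _ (Num.floor x)).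
exists q^-1 => //; rewrite fmorphV /=; rewrite E /Tm invrK //.
Qed.

Lemma irr_yk m (x : RR) : irrational x -> irrational (yk m x).
Proof. by move=> ix; elim: m => [|m IH] //=; exact: irr_Tm. Qed.

Lemma floor_near (r : RR) : irrational r ->
  \forall r' \near r, Num.floor r' = Num.floor r.
Proof.
move=> ir; have := irr_frac_neq0 ir; set c := Num.floor r => hne.
have /andP[h1 h2] := floor_itv r; rewrite -/c in h1 h2.
have h1' : c%:~R < r by rewrite lt_neqAle h1 andbT; apply: contra hne => /eqP ->; rewrite subrr.
have h2' : r < c%:~R + 1 by rewrite intrD in h2.
have n1 : \forall r' \near r, c%:~R < r'.
  apply/nbhs_ballP; exists (r - c%:~R); first by rewrite /= subr_gt0.
  by move=> r' /=; rewrite /ball /= ltr_distlC => /andP[+ _]; lra.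
have n2 : \forall r' \near r, r' < c%:~R + 1.
  apply/nbhs_ballP; exists (c%:~R + 1 - r); first by rewrite /= subr_gt0.
  by move=> r' /=; rewrite /ball /= ltr_distlC => /andP[_ +]; lra.
apply: filterS (filterI n1 n2) => r' [e1 e2].
by apply: floor_def; rewrite intrD; apply/andP; split => //; exact: ltW.
Qed.

Lemma Tm_cont (r : RR) : irrational r -> {for r, continuous Tm}.
Proof.
move=> ir; set c := Num.floor r.
have h : {near r, (fun r' => (r' - c%:~R)^-1) =1 Tm}.
  by apply: filterS (floor_near ir) => r' E; rewrite /Tm E.
apply: cvg_trans (near_eq_cvg h) _.
rewrite /Tm -/c; apply: cvgV; first exact: irr_frac_neq0.
by apply: cvgB; [exact: cvg_id | exact: cvg_cst].
Qed.

Lemma yk_cont m (r : RR) : irrational r -> {for r, continuous (yk m)}.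
Proof.
move=> ir; elim: m => [|m IH]; first exact: cvg_id.
have -> : yk m.+1 = Tm \o yk m by apply: funext => x; rewrite /yk iterS.
apply: continuous_comp; first exact: IH.
exact: Tm_cont (irr_yk ir).
Qed.

Definition dig (m : nat) (x : irrationals) : nat := `|Num.floor (yk m (pv x))|%N.

Lemma dig_loc m (x : irrationals) : \forall x' \near x, dig m x' = dig m x.
Proof.
have ir := @irr_yk m _ (@pv_irr x).
have h1 := @yk_cont m (pv x) (@pv_irr x) _ (floor_near ir).
have h2 := @pv_cont x _ h1.
rewrite /dig; apply: (filterS (P:= pv @^-1` (yk m @^-1` [set r' | Num.floor r' = Num.floor (yk m (pv x))]))) h2 => x' /= E; by rewrite E.
Qed.

Definition Sa (a : nat) (y : RR) : RR := a%:R + y^-1.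
Fixpoint Fz (n : nat) (a : nat -> nat) (y : RR) : RR :=
  if n is n'.+1 then Sa (a 0%N) (Fz n' (fun i => a i.+1) y) else y.

Definition inI (a : nat) (y : RR) := (a%:R <= y <= a%:R + 1).

Lemma inI_ge2 (a : nat) y : (2 <= a)%N -> inI a y -> 2 <= y.
Proof.
move=> a2 /andP[h _]; apply: le_trans h.
by rewrite -[2 in X in X <= _]/(2%:R : RR) ler_nat.
Qed.

Lemma inv_bounds (y : RR) : 2 <= y -> 0 < y^-1 /\ y^-1 < 1.
Proof.
move=> y2; have y0 : 0 < y by lra.
split; first by rewrite invr_gt0.
by rewrite (invf_lte1 _).2 //; lra.
Qed.

Lemma Sa_in (a b : nat) y : (2 <= b)%N -> inI b y -> inI a (Sa a y).
Proof.
move=> b2 hb; have [h1 h2] := inv_bounds (inI_ge2 b2 hb).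
by rewrite /inI /Sa; apply/andP; split; lra.
Qed.

Lemma Fz_in n : forall a y, (forall i, 2 <= a i)%N -> inI (a n) y -> inI (a 0%N) (Fz n a y).
Proof.
elim: n => [//|n IH] a y a2 hy /=.
apply: (@Sa_in _ (a 1%N)) => //; exact: (IH (fun i => a i.+1)).
Qed.

Lemma Tm_Sa (a : nat) w : 2 <= w -> Tm (Sa a w) = w.
Proof.
move=> w2; have [h1 h2] := inv_bounds w2; rewrite /Tm.
have -> : Num.floor (Sa a w) = a%:Z.
  apply: floor_def; rewrite intrD -pmulrn /Sa; apply/andP; split; lra.
by rewrite -pmulrn /Sa addrAC subrr add0r invrK.
Qed.

Lemma yk_Fz n : forall a y, (forall i, 2 <= a i)%N -> inI (a n) y -> yk n (Fz n a y) = y.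
Proof.
elim: n => [//|n IH] a y a2 hy.
rewrite /yk iterSr /= Tm_Sa; first exact: (IH (fun i => a i.+1)).
apply: (@inI_ge2 (a 1%N)) => //; exact: (@Fz_in n (fun i => a i.+1)).
Qed.

Lemma Fz_S n : forall a y, Fz n.+1 a y = Fz n a (Sa (a n) y).
Proof.
elim: n => [//|n IH] a y.
change (Sa (a 0%N) (Fz n.+1 (fun i => a i.+1) y) =
  Sa (a 0%N) (Fz n (fun i => a i.+1) (Sa (a n.+1) y))).
by rewrite IH.
Qed.

Lemma Sa_cont (a : nat) (w : RR) : 0 < w -> {for w, continuous (Sa a)}.
Proof.
move=> w0; rewrite /Sa.
have hv : (fun y : RR => y^-1) @ w --> w^-1.
  by apply: cvgV; [rewrite gt_eqF | exact: cvg_id].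
exact: (@cvgD RR RR^o RR (nbhs w) (nbhs_filter w) (fun=> a%:R) (fun y => y^-1) a%:R w^-1 (cvg_cst _) hv).
Qed.

Lemma Fz_cont n : forall a y, (forall i, 2 <= a i)%N -> 0 < y ->
  {for y, continuous (Fz n a)} /\ 0 < Fz n a y.
Proof.
elim: n => [|n IH] a y a2 y0; first by split => //; exact: cvg_id.
have [c p] := IH (fun i => a i.+1) y (fun i => a2 i.+1) y0.
split.
  have -> : Fz n.+1 a = Sa (a 0%N) \o Fz n (fun i => a i.+1) by [].
  apply: continuous_comp; first exact: c.
  exact: Sa_cont.
rewrite /= /Sa; have := a2 0%N; rewrite -(ler_nat RR) => h.
by apply: ltr_wpDl; [lra | rewrite invr_gt0].
Qed.

Definition Eset (a : nat -> nat) (n : nat) : set RR :=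
  Fz n a @` [set y | inI (a n) y].

Lemma inI_itv (a : nat) : [set y | inI a y] = [set` `[(a%:R : RR), a%:R + 1]].
Proof. by apply/seteqP; split => y; rewrite /= in_itv /=. Qed.

Lemma Eset_compact a n : (forall i, 2 <= a i)%N -> compact (Eset a n).
Proof.
move=> a2; rewrite /Eset inI_itv; apply: continuous_compact; last exact: segment_compact.
apply: continuous_in_subspaceT => y /set_mem; rewrite /= in_itv /= => hy.
have y0 : 0 < y by have := inI_ge2 (a2 n) hy; lra.
by case: (Fz_cont n a2 y0).
Qed.

Lemma Eset_nest a n : (forall i, 2 <= a i)%N -> Eset a n.+1 `<=` Eset a n.
Proof.
move=> a2 _ [y hy <-]; exists (Sa (a n) y); last by rewrite Fz_S.
exact: (@Sa_in (a n) (a n.+1) y (a2 n.+1) hy).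
Qed.

Lemma Eset_mono a i j : (forall i, 2 <= a i)%N -> (i <= j)%N -> Eset a j `<=` Eset a i.
Proof.
move=> a2 /subnK <-; elim: (j - i)%N => [//|k IH] p hp.
apply: IH; apply: (@Eset_nest a (k + i)%N a2); by rewrite -addSn.
Qed.

Lemma Eset_inter a : (forall i, 2 <= a i)%N -> exists p, forall n, Eset a n p.
Proof.
move=> a2.
have := @compact_In0 RR; move=> /(congr1 (fun P => P (Eset a 0%N))) /= E.
have cE0 := @Eset_compact a 0%N a2; rewrite E in cE0.
have cf : closed_fam_of (Eset a 0%N) [set: nat] (Eset a).
  exists (Eset a) => [i _|i _].
    exact: compact_closed (@Rhausdorff RR) (@Eset_compact a i a2).
  by apply/seteqP; split => [q hq|q [//]]; split => //; exact: (@Eset_mono a 0%N i a2 (leq0n i)).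
have fI : finI [set: nat] (Eset a).
  move=> D' _; exists (Fz (\max_(i <- D') i) a (a (\max_(i <- D') i))%:R) => i /= hi.
  apply: (@Eset_mono a i (\max_(i <- D') i) a2); first by apply: leq_bigmax_seq.
  by exists (a (\max_(i <- D') i))%:R => //; rewrite /= /inI; apply/andP; split; lra.
have [p hp] := cE0 nat [set: nat] (Eset a) cf fI.
by exists p => n; exact: hp.
Qed.


Lemma descent (Y : nat -> RR) : (forall n, 2 <= Y n) -> (forall n, Y n.+1 = Tm (Y n)) ->
  forall N n (p : int) (q : nat), (0 < q)%N -> (q <= N)%N -> Y n <> p%:~R / q%:R.
Proof.
move=> Y2 YT; elim=> [|N IH] n p q q0 qN E; first by lia.
set c := Num.floor (Y n).
have fr : Y n - c%:~R = (Y n.+1)^-1 by rewrite YT /Tm invrK.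
have [f0 f1] := inv_bounds (Y2 n.+1).
set r : int := (p - c * q%:Z)%R.
have qR : (0 : RR) < q%:R by rewrite ltr0n.
have hr : r%:~R / q%:R = (Y n.+1)^-1.
  rewrite -fr E /r rmorphB rmorphM /= -pmulrn; field.
  by rewrite gt_eqF.
have r0 : (0 < r)%R.
  rewrite -(ltr0z RR); have : 0 < r%:~R / (q%:R : RR) by rewrite hr.
  by rewrite pmulr_lgt0 // invr_gt0.
have rq : (r < q%:Z)%R.
  rewrite -(ltr_int RR) -pmulrn; have : r%:~R / (q%:R : RR) < 1 by rewrite hr.
  by rewrite ltr_pdivrMr // mul1r.
have rE : r = (`|r|%N)%:Z by rewrite gez0_abs // ltW.
have Yr : Y n.+1 = (q%:Z)%:~R / (`|r|%N)%:R.
  by rewrite -[Y n.+1]invrK -hr invf_div -pmulrn natr_absz gtr0_norm.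
apply: (IH n.+1 q%:Z `|r|%N) => //; lia.
Qed.

Lemma dig_dom (k : nat -> nat) : exists x : irrationals, forall m, (k m <= dig m x)%N.
Proof.
pose a n := (k n + 2)%N.
have a2 : forall i, (2 <= a i)%N by move=> i; rewrite /a; lia.
have [p hp] := Eset_inter a2.
have hy : forall n, inI (a n) (yk n p).
  by move=> n; have [y hy <-] := hp n; rewrite yk_Fz.
have Ip : irrational p.
  move=> [t _ E].
  have Y2 n : 2 <= yk n p := inI_ge2 (a2 n) (hy n).
  have YT n : yk n.+1 p = Tm (yk n p) by rewrite /yk iterS.
  have dpos := denq_gt0 t.
  apply: (@descent (fun n => yk n p) Y2 YT `|denq t|%N 0%N (numq t) `|denq t|%N) => //.
    by rewrite absz_gt0 gt_eqF.
  by rewrite /= -E natr_absz gtr0_norm.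
exists (mkP Ip) => m; rewrite /dig pv_mkP.
have /andP[h _] := hy m.
have : ((a m)%:Z <= Num.floor (yk m p))%R by rewrite floor_ge_int -pmulrn.
rewrite /a; lia.
Qed.

Lemma fwd_dir : (~ exists Y : topologicalType, michael_space Y) ->
  forall X : topologicalType, tychonoff_space X -> K_Lusin X -> productively_lindelof X.
Proof.
move=> nM X tX [Z [f [tZ [lZ [[_ [K [g [cK [hK [eg [_ [G oG rg]]]]]]]] [cf [inf sf]]]]]]] Y tY lY.
have lPY : lindelof (irrationals * Y)%type.
  apply: lindelof_swap; apply: contrapT => nl; apply: nM.
  by exists Y; split => //; split.
have lZY : lindelof (Z * Y)%type := main_cover dig_loc dig_dom lPY lZ cK hK eg oG rg.
apply: (@lindelof_surj _ _ (fun p : Z * Y => (f p.1, p.2))) lZY.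
  move=> [z y] A [[B C] /= [nB nC] BC].
  exists (f @^-1` B, C) => /=; first by split => //; exact: cf nB.
  by move=> [z' y'] /= [h1 h2]; apply: (BC (f z', y')).
by move=> [x y]; have [z <-] := sf x; exists (z, y).
Qed.

Lemma back_dir :
  (forall X : topologicalType, tychonoff_space X -> K_Lusin X -> productively_lindelof X) ->
  ~ exists Y : topologicalType, michael_space Y.
Proof.
move=> H [Y [tY [lY nl]]]; apply: nl; apply: lindelof_swap.
exact: (H _ P_tych P_KLusin Y tY lY).
Qed.

Theorem mainTheorem8 :
  (~ exists Y : topologicalType, michael_space Y) <->
  (forall X : topologicalType, tychonoff_space X -> K_Lusin X -> productively_lindelof X).
Proof. by split; [exact: fwd_dir | exact: back_dir]. Qed.
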